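(* (i) For integers $p\geq 0$, $k\geq p+1$ and $n\geq 2k-p+2$, $q(M_{n,n-1}^{n-k-1,k-p})>q(M_{n,n-1}^{k-p,n-k-1})$. (ii) For integers $p\geq 0$, $k\geq p+2$ and $n\geq 2k-p+2$, $q(M_{n,n-1}^{n-k,k-p-1})>q(M_{n,n-1}^{n-k-1,k-p})$.
   Context: $q$ denotes the largest eigenvalue of $D+A$ (diagonal degree matrix plus adjacency matrix). $M_{n,m}^{s,t}$: bipartite graph with parts $X=X_1\cup X_2$, $Y=Y_1\cup Y_2$, $|X_1|=s$, $|X_2|=n-s$, $|Y_1|=m-t$, $|Y_2|=t$; edges are all pairs between $X_1$ and $Y_1$, between $X_2$ and $Y_1$, and between $X_2$ and $Y_2$. *)

(* Defs.v *)
From mathcomp Require Import all_boot all_order all_algebra.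
From mathcomp Require Import classical_sets reals.
Unset Printing Implicit Defensive.
Import Order.TTheory GRing.Theory Num.Theory.
Local Open Scope ring_scope.

(* Vertices of M_{n,m}^{s,t} are 'I_(n+m): index i < n is x_i in X
   (X1 = {x_i | i < s}, X2 = {x_i | s <= i < n});
   index n + j (j < m) is y_j in Y (Y1 = {y_j | j < m - t}, Y2 = {y_j | j >= m - t}). *)

(* adjacency between x_i (i < n) and y_j (j < m):
   X1-Y1, X2-Y1, X2-Y2, i.e. y_j in Y1 or x_i in X2. *)
Definition M_adjXY (s t m : nat) (i j : nat) : bool :=
  (j < m - t)%N || (s <= i)%N.

Definition M_adj (n m s t : nat) (u v : 'I_(n + m)) : bool :=
  [&& (u < n)%N, (n <= v)%N & M_adjXY s t m u (v - n)] ||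
  [&& (v < n)%N, (n <= u)%N & M_adjXY s t m v (u - n)].

Definition M_A (R : realType) (n m s t : nat) : 'M[R]_(n + m) :=
  \matrix_(u, v) (@M_adj n m s t u v)%:R.

Definition M_D (R : realType) (n m s t : nat) : 'M[R]_(n + m) :=
  diag_mx (\row_u (\sum_v (M_A R n m s t) u v)).

Definition M_Q (R : realType) (n m s t : nat) : 'M[R]_(n + m) :=
  M_D R n m s t + M_A R n m s t.

(* largest eigenvalue of a square real matrix (a finite nonempty set for
   symmetric matrices, so the supremum is the maximum) *)
Definition largest_eigenvalue (R : realType) (k : nat) (A : 'M[R]_k) : R :=
  sup [set l : R | eigenvalue A l].

Definition qM (R : realType) (n m s t : nat) : R :=
  @largest_eigenvalue R (n + m) (M_Q R n m s t).

(* Main.v *)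
Require Import Defs.
From mathcomp Require Import all_boot all_order all_algebra.
From mathcomp Require Import classical_sets reals.
From mathcomp Require Import ring lra zify.
Import Order.TTheory GRing.Theory Num.Theory.
Local Open Scope ring_scope.

Section S.
Variable R : realType.

Definition vecf (n m s t : nat) (a b c d : R) (i : nat) : R :=
  if (i < n)%N then (if (i < s)%N then a else b)
  else (if (i - n < m - t)%N then c else d).

Definition adjn (n m s t : nat) (u v : nat) : bool :=
  [&& (u < n)%N, (n <= v)%N & M_adjXY s t m u (v - n)] ||
  [&& (v < n)%N, (n <= u)%N & M_adjXY s t m v (u - n)].

Lemma colsum n m s t a b c d (j : 'I_(n+m)) : (s <= n)%N -> (t <= m)%N ->
 \sum_(i < n+m) vecf n m s t a b c d i * (M_adj n m s t i j)%:R =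
 if (j < n)%N then (if (j < s)%N then c *+ (m-t) else c *+ (m-t) + d *+ t)
 else (if (j - n < m - t)%N then a *+ s + b *+ (n-s) else b *+ (n-s)).
Proof.
move=> hs ht.
have jlt := ltn_ord j.
set G := fun i : nat => vecf n m s t a b c d i * (adjn n m s t i j)%:R.
have -> : \sum_(i < n+m) vecf n m s t a b c d i * (M_adj n m s t i j)%:R
   = \sum_(i < n+m) G i by [].
rewrite -(big_mkord (fun _ => true) G) (@big_cat_nat _ _ _ n 0 (n+m)) ?leq_addr //=.
case: ifP => jn.
- rewrite (@big_cat_nat _ _ _ (n + (m - t)) n (n+m)) ?leq_addr //=; last by lia.
  rewrite (@eq_big_nat _ _ _ 0 n _ (fun _ => 0)); last first.
    move=> i /andP[_ h]; rewrite /G /adjn.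
    have -> : (n <= j)%N = false by lia.
    have -> : (n <= i)%N = false by lia.
    by rewrite !andbF mulr0.
  rewrite (@eq_big_nat _ _ _ n (n + (m - t)) _ (fun _ => c)); last first.
    move=> i /andP[h1 h2]; rewrite /G /adjn /vecf /M_adjXY.
    have -> : (i < n)%N = false by lia.
    have -> : (i - n < m - t)%N = true by lia.
    by rewrite jn h1 /= mulr1.
  case: ifP => js.
  + rewrite (@eq_big_nat _ _ _ (n + (m - t)) (n + m) _ (fun _ => 0)); last first.
      move=> i /andP[h1 h2]; rewrite /G /adjn /vecf /M_adjXY.
      have -> : (i < n)%N = false by lia.
      have -> : (i - n < m - t)%N = false by lia.
      have -> : (s <= j)%N = false by lia.
      by rewrite jn /= andbF mulr0.
    rewrite !sumr_const_nat !mul0rn add0r addr0.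
    congr (_ *+ _); lia.
  + rewrite (@eq_big_nat _ _ _ (n + (m - t)) (n + m) _ (fun _ => d)); last first.
      move=> i /andP[h1 h2]; rewrite /G /adjn /vecf /M_adjXY.
      have -> : (i < n)%N = false by lia.
      have -> : (i - n < m - t)%N = false by lia.
      have -> : (s <= j)%N = true by lia.
      have -> : (n <= i)%N = true by lia.
      by rewrite jn /= ?orbT ?andbT mulr1.
    rewrite !sumr_const_nat mul0rn add0r.
    congr (_ *+ _ + _ *+ _); lia.
- rewrite (@eq_big_nat _ _ _ n (n + m) _ (fun _ => 0)); last first.
    move=> i /andP[h1 h2]; rewrite /G /adjn.
    have -> : (i < n)%N = false by lia.
    by rewrite jn /= mulr0.
  rewrite sumr_const_nat mul0rn addr0.
  rewrite (@big_cat_nat _ _ _ s 0 n) //=.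
  case: ifP => jy.
  + rewrite (@eq_big_nat _ _ _ 0 s _ (fun _ => a)); last first.
      move=> i /andP[h1 h2]; rewrite /G /adjn /vecf /M_adjXY.
      have -> : (i < n)%N = true by lia.
      have -> : (i < s)%N = true by lia.
      have -> : (n <= j)%N = true by lia.
      by rewrite jy /= mulr1.
    rewrite (@eq_big_nat _ _ _ s n _ (fun _ => b)); last first.
      move=> i /andP[h1 h2]; rewrite /G /adjn /vecf /M_adjXY.
      have -> : (i < n)%N = true by lia.
      have -> : (i < s)%N = false by lia.
      have -> : (n <= j)%N = true by lia.
      by rewrite jy /= mulr1.
    by rewrite !sumr_const_nat subn0.
  + rewrite (@eq_big_nat _ _ _ 0 s _ (fun _ => 0)); last first.
      move=> i /andP[h1 h2]; rewrite /G /adjn /vecf /M_adjXY.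
      have -> : (i < n)%N = true by lia.
      have -> : (i < s)%N = true by lia.
      have -> : (s <= i)%N = false by lia.
      by rewrite jy jn /= ?andbF mulr0.
    rewrite (@eq_big_nat _ _ _ s n _ (fun _ => b)); last first.
      move=> i /andP[h1 h2]; rewrite /G /adjn /vecf /M_adjXY.
      have -> : (i < n)%N = true by lia.
      have -> : (i < s)%N = false by lia.
      have -> : (s <= i)%N = true by lia.
      have -> : (n <= j)%N = true by lia.
      by rewrite /= orbT mulr1.
    by rewrite !sumr_const_nat mul0rn add0r.
Qed.

Lemma M_adjC n m s t (u v : 'I_(n+m)) : M_adj n m s t u v = M_adj n m s t v u.
Proof. by rewrite /M_adj orbC. Qed.

Lemma vecf1 n m s t i : vecf n m s t (1:R) 1 1 1 i = 1.
Proof. by rewrite /vecf; case: ifP; case: ifP. Qed.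

Lemma lift n m s t (l a b c d : R) : (s <= n)%N -> (t <= m)%N ->
  let S := (s%:R : R) in let T := (t%:R : R) in
  let U := ((m - t)%:R : R) in let W := ((n - s)%:R : R) in
  l * a = a * U + c * U ->
  l * b = b * (U + T) + c * U + d * T ->
  l * c = c * (S + W) + a * S + b * W ->
  l * d = d * W + b * W ->
  (\row_(j < n + m) vecf n m s t a b c d j) *m M_Q R n m s t
    = l *: \row_(j < n + m) vecf n m s t a b c d j.
Proof.
move=> hs ht S T U W E1 E2 E3 E4.
apply/rowP => j.
rewrite /M_Q mulmxDr /M_D mul_mx_diag !mxE.
have -> : \sum_(v < n + m) M_A R n m s t j v
    = \sum_(i < n+m) vecf n m s t 1 1 1 1 i * (M_adj n m s t i j)%:R.
  by apply: eq_bigr => i _; rewrite mxE vecf1 mul1r M_adjC.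
have -> : \sum_j0 (\row_j1 vecf n m s t a b c d j1) 0 j0 * M_A R n m s t j0 j
    = \sum_(i < n+m) vecf n m s t a b c d i * (M_adj n m s t i j)%:R.
  by apply: eq_bigr => i _; rewrite !mxE.
rewrite !colsum // /vecf.
rewrite -/S -/T -/U -/W.
case: ifP => jn; first case: ifP => js; last case: ifP => jy.
all: rewrite ?mulr1n ?mulr_natr -/S -/T -/U -/W.
all: try lra.
Qed.
Lemma eig_ub N (Q : 'M[R]_N) (x : 'rV[R]_N) c l :
  (forall i j, 0 <= Q i j) -> (forall i, 0 < x 0 i) -> x *m Q = c *: x ->
  eigenvalue Q l -> l <= c.
Proof.
move=> Qge0 xgt0 hx /eigenvalueP [v hv vn0].
have [j0 hj0] : exists j0, v 0 j0 != 0.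
  apply/existsP; apply: contraR vn0 => /existsPn H; apply/eqP/rowP => k.
  by rewrite mxE; move: (H k); rewrite negbK => /eqP.
pose F := fun i => `|v 0 i| / x 0 i.
case: (@arg_maxP _ R 'I_N j0 xpredT F isT) => j _ hj.
set r := F j.
have hr : forall i, `|v 0 i| <= r * x 0 i.
  by move=> i; rewrite -ler_pdivrMr // ?xgt0 //; exact: hj.
have rpos : 0 < r.
  apply: (lt_le_trans _ (hj j0 isT)).
  by rewrite /F divr_gt0 // ?normr_gt0 // xgt0.
have vj : `|v 0 j| = r * x 0 j by rewrite /r /F divfK // gt_eqF // xgt0.
have e1 : l * v 0 j = \sum_i v 0 i * Q i j.
  by have := congr1 (fun M : 'rV[R]_N => M 0 j) hv; rewrite !mxE => <-.
have e2 : \sum_i x 0 i * Q i j = c * x 0 j.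
  by have := congr1 (fun M : 'rV[R]_N => M 0 j) hx; rewrite !mxE.
have h3 : `|l| * `|v 0 j| <= r * (c * x 0 j).
  rewrite -normrM e1 -e2 mulr_sumr.
  apply: (le_trans (ler_norm_sum _ _ _)).
  apply: ler_sum => i _.
  rewrite normrM (ger0_norm (Qge0 i j)) mulrA.
  by apply: ler_wpM2r => //; exact: hr.
have xj := xgt0 j.
rewrite vj in h3.
have : `|l| <= c.
  have h4 : `|l| * (r * x 0 j) <= c * (r * x 0 j) by lra.
  have rx : 0 < r * x 0 j by rewrite mulr_gt0.
  by move: h4; rewrite ler_pM2r.
move=> h5; exact: le_trans (ler_norm l) h5.
Qed.
Definition Pf (S T U x : R) : R :=
  ((x - (U+T+1))*(x-U) - S*U) * ((x-(U+T))*(x-(U+T+1-S)) - T*(U+T+1-S))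
  - U*(U+T+1-S)*(x-U)*(x-(U+T+1-S)).
Definition hf (S T U x : R) : R := (x-(U+T))*(x-(U+T+1-S)) - T*(U+T+1-S).

Lemma ivt_poly (f : R -> R) (p : {poly R}) a b :
  (forall x, p.[x] = f x) -> a <= b -> f a <= 0 -> 0 <= f b ->
  exists2 x, a <= x <= b & f x = 0.
Proof.
move=> hp ab fa fb.
have [|x hx /rootP rx] := @poly_ivt R p a b ab; first by rewrite !hp fa fb.
by exists x => //; rewrite -hp.
Qed.

Lemma Pf_poly S T U : exists p : {poly R}, forall x, p.[x] = Pf S T U x.
Proof.
exists (((('X - (U+T+1)%:P)*('X-U%:P) - (S*U)%:P) *
   (('X-(U+T)%:P)*('X-(U+T+1-S)%:P) - (T*(U+T+1-S))%:P))
  - (U*(U+T+1-S))%:P*('X-U%:P)*('X-(U+T+1-S)%:P)).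
by move=> x; rewrite !hornerE.
Qed.

Lemma hf_poly S T U : exists p : {poly R}, forall x, p.[x] = hf S T U x.
Proof.
exists (('X-(U+T)%:P)*('X-(U+T+1-S)%:P) - (T*(U+T+1-S))%:P).
by move=> x; rewrite !hornerE.
Qed.

Lemma perron_real S T U : 1 <= S -> 1 <= T -> 1 <= U -> 1 <= U+T+1-S ->
  exists l, [/\ U+T+1 < l, l < 2*(U+T+1) - 1, Pf S T U l = 0 & 0 < hf S T U l].
Proof.
move=> S1 T1 U1 W1.
have [ph hph] := hf_poly S T U.
have [pp hpp] := Pf_poly S T U.
have hMr : hf S T U (U+T) = - T * (U+T+1-S) by rewrite /hf; ring.
have htop : hf S T U (2*(U+T+1)-1) = (U+T+1)*(U+T+S) - T*(U+T+1-S)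
  by rewrite /hf; ring.
have [lh /andP[lh1 lh2] hlh] : exists2 lh, U+T <= lh <= 2*(U+T+1)-1 & hf S T U lh = 0.
  apply: (@ivt_poly (hf S T U) ph (U+T) (2*(U+T+1)-1) hph); first lra.
    rewrite hMr; nra.
  rewrite htop; nra.
have lhMr : U + T < lh.
  rewrite lt_neqAle lh1 andbT; apply/eqP => E.
  by move: hlh; rewrite -E hMr => /eqP; rewrite -subr_eq0 => /eqP; nra.
have PN : Pf S T U (U+T+1) = - (U+T+1) * S * U by rewrite /Pf; ring.
have Plh : Pf S T U lh = - U*(U+T+1-S)*(lh-U)*(lh-(U+T+1-S)).
  have -> : Pf S T U lh = ((lh - (U+T+1))*(lh-U) - S*U) * hf S T U lh
     - U*(U+T+1-S)*(lh-U)*(lh-(U+T+1-S)) by rewrite /Pf /hf.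
  by rewrite hlh mulr0 sub0r; ring.
have Ptop : Pf S T U (2*(U+T+1)-1) = S*T*(2*(U+T+1)-1)^+2 by rewrite /Pf; ring.
have [L [LN Llh Ltop PL]] : exists L, [/\ U+T+1 <= L, lh <= L, L <= 2*(U+T+1)-1 & Pf S T U L < 0].
  case: (lerP (U+T+1) lh) => hc.
  - exists lh; split => //; rewrite Plh.
    have h1 : 0 < lh - U by lra.
    have h2 : 0 < lh - (U+T+1-S) by lra.
    have h3 : 0 < U*(U+T+1-S) by (apply: mulr_gt0; lra).
    have : 0 < U*(U+T+1-S)*(lh-U)*(lh-(U+T+1-S)) by (apply: mulr_gt0 => //; apply: mulr_gt0).
    lra.
  - exists (U+T+1); split => //; [exact: ltW | lra |].
    rewrite PN.
    have : 0 < (U+T+1) * S * U by (apply: mulr_gt0; [apply: mulr_gt0|]; lra).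
    lra.
have Ptop0 : 0 <= Pf S T U (2*(U+T+1)-1).
  rewrite Ptop; apply: mulr_ge0; [apply: mulr_ge0; lra | exact: sqr_ge0].
have Ptop1 : 0 < Pf S T U (2*(U+T+1)-1).
  rewrite Ptop; apply: mulr_gt0; [apply: mulr_gt0; lra | apply: exprn_gt0; lra].
have [rho /andP[r1 r2] hr] := @ivt_poly (Pf S T U) pp L (2*(U+T+1)-1) hpp Ltop (ltW PL) Ptop0.
have rL : L < rho.
  rewrite lt_neqAle r1 andbT; apply/eqP => E; move: PL; rewrite E hr; lra.
have rtop : rho < 2*(U+T+1)-1.
  rewrite lt_neqAle r2 andbT; apply/eqP => E; move: Ptop1; rewrite -E hr; lra.
exists rho; split => //; first lra.
have -> : hf S T U rho = hf S T U rho - hf S T U lh by rewrite hlh subr0.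
have -> : hf S T U rho - hf S T U lh = (rho - lh) * (rho + lh - (U+T) - (U+T+1-S))
  by rewrite /hf; ring.
apply: mulr_gt0; lra.
Qed.
Lemma vec_eqs (S T U l : R) : Pf S T U l = 0 ->
  let W := U+T+1-S in let h := hf S T U l in
  let a := U*h in let b := U*(l-U)*(l-W) in let c := (l-U)*h in
  let d := W*U*(l-U) in
  [/\ l * a = a * U + c * U, l * b = b * (U + T) + c * U + d * T,
      l * c = c * (S + W) + a * S + b * W & l * d = d * W + b * W].
Proof.
move=> hP W h a b c d; split.
- rewrite /a /c; ring.
- rewrite /b /c /d /h /hf /W; ring.
- have E : l * c - (c * (S + W) + a * S + b * W) = Pf S T U l
    by rewrite /a /b /c /d /h /hf /W /Pf; ring.
  by apply/eqP; rewrite -subr_eq0 E hP.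
- rewrite /b /d; ring.
Qed.

Definition pvec n s t l : 'rV[R]_(n + (n-1)) :=
  let S := (s%:R : R) in let T := (t%:R : R) in let U := ((n-1-t)%:R : R) in
  let W := U+T+1-S in let h := hf S T U l in
  \row_j vecf n (n-1) s t (U*h) (U*(l-U)*(l-W)) ((l-U)*h) (W*U*(l-U)) j.

Lemma castN n t : (t + 2 <= n)%N ->
  ((n-1-t)%:R : R) + t%:R + 1 = n%:R.
Proof.
move=> h; have e : n = ((n-1-t) + t + 1)%N by lia.
by rewrite [in RHS]e !natrD.
Qed.

Lemma castW n s t : (s < n)%N -> (t + 2 <= n)%N ->
  ((n - s)%:R : R) = ((n-1-t)%:R : R) + t%:R + 1 - s%:R.
Proof.
move=> hs ht; rewrite castN // natrB; last exact: ltnW.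
by [].
Qed.

Lemma pvec_eig n s t l : (s < n)%N -> (t + 2 <= n)%N ->
  Pf s%:R t%:R (n-1-t)%:R l = 0 ->
  pvec n s t l *m M_Q R n (n-1) s t = l *: pvec n s t l.
Proof.
move=> hs ht hP.
have [E1 E2 E3 E4] := vec_eqs _ _ _ _ hP.
rewrite /pvec; apply: lift; try lia.
all: rewrite ?(@castW n s t hs ht).
all: try exact E1; try exact E2; try exact E3; try exact E4.
Qed.
Lemma MQ_ge0 n m s t i j : 0 <= M_Q R n m s t i j.
Proof.
rewrite !mxE; apply: addr_ge0; last exact: ler0n.
apply: mulrn_wge0; apply: sumr_ge0 => k _; rewrite mxE; exact: ler0n.
Qed.

Lemma qM_of n m s t rho :
  eigenvalue (M_Q R n m s t) rho ->
  (forall l, eigenvalue (M_Q R n m s t) l -> l <= rho) ->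
  qM R n m s t = rho.
Proof.
move=> he hub; rewrite /qM /largest_eigenvalue.
apply/le_anti/andP; split.
- apply: ge_sup; first by exists rho.
  by move=> y hy; exact: hub.
- have hu : has_ubound [set l : R | eigenvalue (M_Q R n m s t) l].
    by exists rho => y hy; exact: hub.
  exact: (ub_le_sup hu).
Qed.

Lemma qM_perron n s t : (1 <= s)%N -> (1 <= t)%N -> (s < n)%N -> (t + 2 <= n)%N ->
  exists rho, [/\ qM R n (n-1) s t = rho, n%:R < rho, rho < 2 * n%:R - 1,
    Pf s%:R t%:R (n-1-t)%:R rho = 0 &
    forall l, eigenvalue (M_Q R n (n-1) s t) l -> l <= rho].
Proof.
move=> s1 t1 hs ht.
have eN := @castN n t ht.
have S1 : (1 : R) <= s%:R by rewrite ler1n.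
have T1 : (1 : R) <= t%:R by rewrite ler1n.
have U1 : (1 : R) <= (n-1-t)%:R by rewrite ler1n; lia.
have W1 : (1 : R) <= (n-1-t)%:R + t%:R + 1 - s%:R.
  have : ((s+1)%:R : R) <= n%:R by rewrite ler_nat; lia.
  rewrite natrD eN; lra.
have [rho [h1 h2 hP hh]] := perron_real _ _ _ S1 T1 U1 W1.
rewrite eN in h1 h2.
have heig := @pvec_eig n s t _ hs ht hP.
have pos : forall i, 0 < pvec n s t rho 0 i.
  move=> i; rewrite /pvec mxE /vecf.
  have a1 : 0 < rho - (n-1-t)%:R by lra.
  have a2 : 0 < rho - ((n-1-t)%:R + t%:R + 1 - s%:R) by lra.
  have a3 : (0:R) < (n-1-t)%:R by lra.
  have a4 : (0:R) < (n-1-t)%:R + t%:R + 1 - s%:R by lra.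
  case: ifP => _; first case: ifP => _; last case: ifP => _.
  all: do ?apply: mulr_gt0 => //.
have hub : forall l, eigenvalue (M_Q R n (n-1) s t) l -> l <= rho.
  move=> l; apply: eig_ub heig => //; exact: MQ_ge0.
have he : eigenvalue (M_Q R n (n-1) s t) rho.
  apply/eigenvalueP; exists (pvec n s t rho) => //.
  have i0 : (0 < n + (n-1))%N by lia.
  apply/eqP => E; have := pos (Ordinal i0); rewrite E mxE; lra.
exists rho; split => //; exact: qM_of.
Qed.

Lemma root_eig n s t l : (1 <= s)%N -> (1 <= t)%N -> (s < n)%N -> (t + 2 <= n)%N ->
  n%:R < l -> Pf s%:R t%:R (n-1-t)%:R l = 0 ->
  eigenvalue (M_Q R n (n-1) s t) l.
Proof.
move=> s1 t1 hs ht hl hP.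
have eN := @castN n t ht.
have heig := @pvec_eig n s t _ hs ht hP.
apply/eigenvalueP; exists (pvec n s t l) => //.
have i0 : (s < n + (n-1))%N by lia.
have S1 : (1 : R) <= s%:R by rewrite ler1n.
have T1 : (1 : R) <= t%:R by rewrite ler1n.
apply/eqP => E; have := congr1 (fun M : 'rV[R]_(n + (n-1)) => M 0 (Ordinal i0)) E.
rewrite /pvec !mxE /vecf /= hs ltnn.
have a1 : 0 < l - (n-1-t)%:R by lra.
have a2 : 0 < l - ((n-1-t)%:R + t%:R + 1 - s%:R) by lra.
have a3 : (0:R) < (n-1-t)%:R by rewrite ltr0n; lia.
have : 0 < (n - 1 - t)%:R * (l - (n - 1 - t)%:R) * (l - ((n - 1 - t)%:R + t%:R + 1 - s%:R)).
  by do ?apply: mulr_gt0 => //.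
lra.
Qed.
Lemma castU n t : (t + 2 <= n)%N -> ((n-1-t)%:R : R) = n%:R - 1 - t%:R.
Proof. move=> h; have := @castN n t h; lra. Qed.

Lemma compare n s1 t1 s2 t2 :
  (1 <= s1)%N -> (1 <= t1)%N -> (s1 < n)%N -> (t1 + 2 <= n)%N ->
  (1 <= s2)%N -> (1 <= t2)%N -> (s2 < n)%N -> (t2 + 2 <= n)%N ->
  (forall x, n%:R < x -> x < 2 * n%:R - 1 -> Pf s1%:R t1%:R (n%:R - 1 - t1%:R) x = 0 ->
     Pf s2%:R t2%:R (n%:R - 1 - t2%:R) x < 0) ->
  qM R n (n-1) s1 t1 < qM R n (n-1) s2 t2.
Proof.
move=> a1 a2 a3 a4 b1 b2 b3 b4 H.
have [r1 [q1 r1a r1b P1 _]] := @qM_perron n s1 t1 a1 a2 a3 a4.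
have [r2 [q2 r2a r2b P2 ub2]] := @qM_perron n s2 t2 b1 b2 b3 b4.
rewrite q1 q2.
rewrite castU // in P1.
have P2r1 := H r1 r1a r1b P1.
have [pp hpp] := Pf_poly s2%:R t2%:R (n%:R - 1 - t2%:R).
have Ptop : Pf s2%:R t2%:R (n%:R - 1 - t2%:R) (2 * n%:R - 1)
   = s2%:R * t2%:R * (2 * n%:R - 1) ^+ 2 by rewrite /Pf; ring.
have Ptop0 : 0 <= Pf s2%:R t2%:R (n%:R - 1 - t2%:R) (2 * n%:R - 1).
  by rewrite Ptop; apply: mulr_ge0; [apply: mulr_ge0; exact: ler0n | exact: sqr_ge0].
have [l /andP[l1 l2] hl] := @ivt_poly _ pp r1 (2 * n%:R - 1) hpp (ltW r1b) (ltW P2r1) Ptop0.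
have lr : r1 < l.
  rewrite lt_neqAle l1 andbT; apply/eqP => E; move: P2r1; rewrite E hl; lra.
have he : eigenvalue (M_Q R n (n-1) s2 t2) l.
  apply: root_eig => //; first lra.
  by rewrite castU.
have := ub2 l he; lra.
Qed.

Lemma lemma5p2_aux :
  (forall p k n : nat, (p + 1 <= k)%N -> (2 * k - p + 2 <= n)%N ->
     qM R n (n - 1) (k - p) (n - k - 1) < qM R n (n - 1) (n - k - 1) (k - p))
  /\
  (forall p k n : nat, (p + 2 <= k)%N -> (2 * k - p + 2 <= n)%N ->
     qM R n (n - 1) (n - k - 1) (k - p) < qM R n (n - 1) (n - k) (k - p - 1)).
Proof.
split.
- move=> p k n h1 h2.
  apply: compare; try lia.
  move=> x hx hx2 hP.
  have BA : ((k - p)%:R : R) + 1 <= (n - k - 1)%:R.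
    have : ((k - p + 1)%:R : R) <= (n - k - 1)%:R by rewrite ler_nat; lia.
    by rewrite natrD.
  have E : Pf (n - k - 1)%:R (k - p)%:R (n%:R - 1 - (k - p)%:R) x
    = Pf (k - p)%:R (n - k - 1)%:R (n%:R - 1 - (n - k - 1)%:R) x
      + ((n - k - 1)%:R - (k - p)%:R) * x * (x - (2 * n%:R - 1))
    by rewrite /Pf; ring.
  rewrite E hP add0r.
  have n0 : (0 : R) <= n%:R by exact: ler0n.
  have : 0 < ((n - k - 1)%:R - (k - p)%:R) * x by apply: mulr_gt0; lra.
  move=> hh; rewrite pmulr_rlt0 //; lra.
- move=> p k n h1 h2.
  apply: compare; try lia.
  move=> x hx hx2 hP.
  have e1 : ((n - k)%:R : R) = (n - k - 1)%:R + 1.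
    have H : ((n - k - 1) + 1 = n - k)%N by lia.
    by rewrite -{1}H natrD.
  have e2 : ((k - p - 1)%:R : R) = (k - p)%:R - 1.
    have H : ((k - p - 1) + 1 = k - p)%N by lia.
    by rewrite -{2}H natrD addrK.
  have BA : ((k - p)%:R : R) + 1 <= (n - k - 1)%:R.
    have : ((k - p + 1)%:R : R) <= (n - k - 1)%:R by rewrite ler_nat; lia.
    by rewrite natrD.
  rewrite e1 e2.
  set A := ((k - p)%:R : R) in hP BA *; set B := ((n - k - 1)%:R : R) in hP BA *.
  have E : Pf (B + 1) (A - 1) (n%:R - 1 - (A - 1)) x
    = Pf B A (n%:R - 1 - A) x
      - x * ((2 * (B - A) + 1) * x - (B - A) * (2 * n%:R - 1))
    by rewrite /Pf; ring.
  rewrite E hP sub0r oppr_lt0.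
  have n0 : (0 : R) <= n%:R by exact: ler0n.
  apply: mulr_gt0; first lra.
  have : 0 < (2 * (B - A) + 1) * (x - n%:R) by apply: mulr_gt0; lra.
  lra.
Qed.
End S.

Theorem lemma5p2 (R : realType) :
  (forall p k n : nat, (p + 1 <= k)%N -> (2 * k - p + 2 <= n)%N ->
     qM R n (n - 1) (k - p) (n - k - 1) < qM R n (n - 1) (n - k - 1) (k - p))
  /\
  (forall p k n : nat, (p + 2 <= k)%N -> (2 * k - p + 2 <= n)%N ->
     qM R n (n - 1) (n - k - 1) (k - p) < qM R n (n - 1) (n - k) (k - p - 1)).
Proof. exact: lemma5p2_aux. Qed.
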